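(* Let $I(\gamma)$ be the ideal of $S^G$ generated by $\{P_\iota:\iota\in U_\#(\gamma)\}$. Then the closed subvariety $\mathcal{V}(I(\gamma))$ of $V/G$ defined by $I(\gamma)$ equals the fixed-point set $(V/G)^\gamma$.
   Context: Let $K$ be an algebraically closed field of characteristic $0$, $V$ an $r$-dimensional $K$-vector space and $G\subset\mathrm{GL}(V)$ a finite group generated by (pseudo)reflections. Let $S$ be the graded algebra of polynomial functions on $V$, with $\mathrm{GL}(V)$ acting by $(gf)(v)=f(g^{-1}v)$; $V/G$ is the quotient variety, with coordinate ring $S^G$, on which $\gamma$ acts. Fix a semisimple $\gamma\in\mathrm{GL}(V)$ normalising $G$. There is a set $\{P_\iota:\iota\in\mathcal{B}(\gamma)\}$ of $r$ homogeneous algebraically independent generators of $S^G$ (basic invariants), indexed by a finite set $\mathcal{B}(\gamma)$, with $\gamma(P_\iota)=\varepsilon_\iota P_\iota$ for scalars $\varepsilon_\iota\in K^\times$; let $U_\#(\gamma)=\{\iota\in\mathcal{B}(\gamma):\varepsilon_\iota\neq 1\}$. *)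

(* Defs.v *)
From HB Require Import structures.
From mathcomp Require Import all_boot all_order all_algebra all_fingroup.
From mathcomp Require Import mxrepresentation.
From mathcomp Require Import mpoly.
Set Implicit Arguments. Unset Strict Implicit. Unset Printing Implicit Defensive.
Import GRing.Theory.
Local Open Scope ring_scope.

Section Defs.
Variables (K : fieldType) (r : nat).

(* substitution X_i |-> sum_j A i j X_j, i.e. f |-> (v |-> f (A v)) *)
Definition lin_subst (A : 'M[K]_r) : r.-tuple {mpoly K[r]} :=
  [tuple \sum_(j < r) A i j *: 'X_j | i < r].

(* action of GL(V) on S = K[V]: (g f)(v) = f (g^-1 v) *)
Definition polyact (g : 'M[K]_r) (f : {mpoly K[r]}) : {mpoly K[r]} :=
  f \mPo lin_subst (invmx g).

(* (pseudo)reflection: an invertible map fixing a hyperplane pointwise, != 1 *)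
Definition pseudoreflection (A : 'M[K]_r) : bool := \rank (A - 1%:M) == 1%N.

Variables (gT : finGroupType) (G : {group gT}) (rG : mx_representation K G r).

Definition invariantG (f : {mpoly K[r]}) : Prop :=
  forall x, x \in G -> polyact (rG x) f = f.

(* a K-point of V/G = Spec S^G : a K-algebra homomorphism S^G -> K
   (only its values on S^G are relevant) *)
Definition quot_point (phi : {mpoly K[r]} -> K) : Prop :=
  [/\ forall f g, invariantG f -> invariantG g -> phi (f + g) = phi f + phi g,
      forall f g, invariantG f -> invariantG g -> phi (f * g) = phi f * phi g
    & forall c : K, phi c%:MP = c].

(* the point gamma . phi of V/G is phi o gamma^{-1} (pullback); fixed points *)
Definition fixed_quot_point (gamma : 'M[K]_r) (phi : {mpoly K[r]} -> K) : Prop :=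
  forall f, invariantG f -> phi (polyact (invmx gamma) f) = phi f.

Definition in_ideal_gen (P : 'I_r -> {mpoly K[r]}) (U : pred 'I_r)
  (f : {mpoly K[r]}) : Prop :=
  exists h : 'I_r -> {mpoly K[r]},
    (forall i, invariantG (h i)) /\ f = \sum_(i < r | U i) h i * P i.

Definition in_zero_locus (P : 'I_r -> {mpoly K[r]}) (U : pred 'I_r)
  (phi : {mpoly K[r]} -> K) : Prop :=
  forall f, in_ideal_gen P U f -> phi f = 0.

End Defs.

(* Main.v *)
Require Import Defs.
From HB Require Import structures.
From mathcomp Require Import all_boot all_order all_algebra all_fingroup.
From mathcomp Require Import mxrepresentation mxred.
From mathcomp Require Import mpoly.
Import GRing.Theory.
Local Open Scope ring_scope.
Section S.
Variables (K : fieldType) (n : nat).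
Lemma compA (p : {mpoly K[n]}) (lq lr : n.-tuple {mpoly K[n]}) :
  (p \mPo lq) \mPo lr = p \mPo [tuple (tnth lq i \mPo lr) | i < n].
Proof.
rewrite [p \mPo lq]comp_mpolyE [p \mPo _]comp_mpolyE raddf_sum /=; apply: eq_bigr => m _.
rewrite comp_mpolyZ rmorph_prod /=; congr (_ *: _); apply: eq_bigr => i _.
by rewrite rmorphXn /= tnth_mktuple.
Qed.

Lemma lin_substM (A B : 'M[K]_n) :
  [tuple (tnth (lin_subst A) i \mPo lin_subst B) | i < n] = lin_subst (A *m B).
Proof.
apply: eq_from_tnth => i; rewrite !tnth_mktuple raddf_sum /=.
under eq_bigr => j _ do rewrite comp_mpolyZ comp_mpolyXU -tnth_nth tnth_mktuple scaler_sumr.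
rewrite exchange_big /=; apply: eq_bigr => k _.
rewrite mxE scaler_suml; apply: eq_bigr => j _; by rewrite scalerA.
Qed.

Lemma lin_subst1 : lin_subst (1%:M : 'M[K]_n) = [tuple 'X_i | i < n].
Proof.
apply: eq_from_tnth => i; rewrite !tnth_mktuple (bigD1 i) //= big1 ?addr0.
  by rewrite mxE eqxx scale1r.
by move=> j /negPf ji; rewrite mxE eq_sym ji scale0r.
Qed.

Lemma polyactK (g : 'M[K]_n) f : g \in unitmx ->
  polyact (invmx g) (polyact g f) = f.
Proof.
move=> gu; rewrite /polyact compA lin_substM invmxK mulVmx // lin_subst1.
exact: comp_mpoly_id.
Qed.
End S.

Section T.
Variables (K : fieldType) (r : nat) (gT : finGroupType) (G : {group gT})
  (rG : mx_representation K G r).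
Local Notation Inv := (invariantG rG).

Lemma inv_comp (Q : {mpoly K[r]}) (t : r.-tuple {mpoly K[r]}) :
  (forall i, Inv (tnth t i)) -> Inv (Q \mPo t).
Proof.
move=> ht x xG; rewrite /polyact compA; congr (Q \mPo _).
by apply: eq_from_tnth => i; rewrite tnth_mktuple; apply: ht.
Qed.

Lemma invC c : Inv c%:MP.
Proof. by move=> x _; rewrite /polyact comp_mpolyC. Qed.

Lemma invM f g : Inv f -> Inv g -> Inv (f * g).
Proof. by move=> hf hg x xG; rewrite /polyact rmorphM /= -!/(polyact _ _) hf ?hg. Qed.

Lemma invD f g : Inv f -> Inv g -> Inv (f + g).
Proof. by move=> hf hg x xG; rewrite /polyact comp_mpolyD -!/(polyact _ _) hf ?hg. Qed.

Lemma invB f g : Inv f -> Inv g -> Inv (f - g).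
Proof. by move=> hf hg x xG; rewrite /polyact comp_mpolyB -!/(polyact _ _) hf ?hg. Qed.

Variables (P : 'I_r -> {mpoly K[r]}) (U : pred 'I_r).
Local Notation I := (in_ideal_gen rG P U).

Lemma I0 : I 0.
Proof.
exists (fun _ => 0); split; first by move=> i; rewrite -mpolyC0; apply: invC.
by rewrite big1 // => i _; rewrite mul0r.
Qed.

Lemma ID f g : I f -> I g -> I (f + g).
Proof.
move=> [h1 [i1 ->]] [h2 [i2 ->]]; exists (fun i => h1 i + h2 i); split.
  by move=> i; apply: invD.
by rewrite -big_split /=; apply: eq_bigr => i _; rewrite mulrDl.
Qed.

Lemma IM a f : Inv a -> I f -> I (a * f).
Proof.
move=> ha [h [ih ->]]; exists (fun i => a * h i); split.
  by move=> i; apply: invM.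
by rewrite mulr_sumr; apply: eq_bigr => i _; rewrite mulrA.
Qed.

Lemma Igen i a : U i -> Inv a -> I (a * P i).
Proof.
move=> Ui ha; exists (fun j => if j == i then a else 0); split.
  by move=> j; case: eqP => // _; rewrite -mpolyC0; apply: invC.
rewrite (bigD1 i) //= eqxx big1 ?addr0 // => j /andP [_ /negPf ->]; by rewrite mul0r.
Qed.

Lemma IN f : I f -> I (- f).
Proof. by move=> hf; rewrite -mulN1r -mpolyCN; apply: IM => //; apply: invC. Qed.

Lemma key (e : 'I_r -> K) (t t' : r.-tuple {mpoly K[r]}) :
  (forall i, e i != 1 -> U i) -> (forall i, Inv (P i)) ->
  (forall i, tnth t i = P i) -> (forall i, tnth t' i = e i *: P i) ->
  forall Q : {mpoly K[r]}, I ((Q \mPo t') - (Q \mPo t)).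
Proof.
move=> hU hP ht ht'.
have it : forall i, Inv (tnth t i) by move=> i; rewrite ht; apply: hP.
have it' : forall i, Inv (tnth t' i).
  by move=> i; rewrite ht' -mul_mpolyC; apply: invM => //; apply: invC.
pose S (A : {mpoly K[r]}) := I ((A \mPo t') - (A \mPo t)).
have SD A B : S A -> S B -> S (A + B).
  by rewrite /S !comp_mpolyD opprD addrACA => ??; apply: ID.
have SM A B : S A -> S B -> S (A * B).
  move=> hA hB; rewrite /S !rmorphM /=.
  have -> : (A \mPo t') * (B \mPo t') - (A \mPo t) * (B \mPo t) =
    (A \mPo t') * ((B \mPo t') - (B \mPo t)) + ((A \mPo t') - (A \mPo t)) * (B \mPo t).
    by rewrite mulrBr mulrBl addrA subrK.
  apply: ID; first by apply: IM => //; apply: inv_comp.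
  by rewrite mulrC; apply: IM => //; apply: inv_comp.
have SC c : S c%:MP by rewrite /S !comp_mpolyC subrr; apply: I0.
have SX i : S 'X_i.
  rewrite /S !comp_mpolyXU -!tnth_nth ht ht' -{2}(scale1r (P i)) -scalerBl.
  have [->|ne] := eqVneq (e i) 1; first by rewrite subrr scale0r; apply: I0.
  by rewrite -mul_mpolyC; apply: Igen; [apply: hU | apply: invC].
elim/mpolyind => [|c m p _ _ hp]; first by rewrite -mpolyC0; apply: (SC).
apply: (SD) => //; rewrite -mul_mpolyC; apply: (SM) => //.
rewrite mpolyXE_id; apply: big_ind; first by rewrite -mpolyC1; apply: (SC).
  by move=> x y; apply: (SM).
move=> i _; elim: (m i) => [|k ih]; first by rewrite expr0 -mpolyC1; apply: (SC).
by rewrite exprS; apply: (SM).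
Qed.

End T.
Theorem lemma5p1 (K : closedFieldType) (r : nat)
  (gT : finGroupType) (G : {group gT}) (rG : mx_representation K G r)
  (gamma : 'M[K]_r) (P : 'I_r -> {mpoly K[r]}) (eps : 'I_r -> K) :
  [pchar K] =i pred0 ->
  mx_faithful rG ->
  G :=: <<[set x in G | pseudoreflection (rG x)]>>%g ->
  gamma \in unitmx ->
  diagonalizable gamma ->
  (forall x, x \in G -> exists2 y, y \in G &
      gamma *m rG x *m invmx gamma = rG y) ->
  (forall i, exists d, P i \is d.-homog) ->
  (forall i, invariantG rG (P i)) ->
  (forall Q : {mpoly K[r]}, Q \mPo [tuple P i | i < r] = 0 -> Q = 0) ->
  (forall f, invariantG rG f -> exists Q : {mpoly K[r]}, f = Q \mPo [tuple P i | i < r]) ->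
  (forall i, eps i != 0) ->
  (forall i, polyact gamma (P i) = eps i *: P i) ->
  forall phi : {mpoly K[r]} -> K, quot_point rG phi ->
    (in_zero_locus rG P [pred i | eps i != 1] phi <-> fixed_quot_point rG gamma phi).

Proof.
move=> _ _ _ gu _ _ _ hP _ hQ hne heps phi [phiD phiM phiC].
have hinv i : polyact (invmx gamma) (P i) = (eps i)^-1 *: P i.
  move: (congr1 (polyact (invmx gamma)) (heps i)).
  rewrite polyactK // /polyact comp_mpolyZ => E.
  by rewrite {2}E scalerA mulVf ?scale1r ?hne.
have phi0 : phi 0 = 0 by rewrite -mpolyC0 phiC.
split.
- move=> hz f hf; have [Q ->] := hQ f hf.
  have E : polyact (invmx gamma) (Q \mPo [tuple P i | i < r])
         = Q \mPo [tuple (eps i)^-1 *: P i | i < r].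
    rewrite /polyact compA; congr (Q \mPo _); apply: eq_from_tnth => i.
    by rewrite !tnth_mktuple -hinv.
  rewrite E.
  set A := Q \mPo [tuple (eps i)^-1 *: P i | i < r].
  set B := Q \mPo [tuple P i | i < r].
  have iA : invariantG rG A.
    apply: inv_comp => i; rewrite tnth_mktuple -mul_mpolyC.
    by apply: invM; [apply: invC | apply: hP].
  have iB : invariantG rG B by apply: inv_comp => i; rewrite tnth_mktuple.
  have -> : A = (A - B) + B by rewrite subrK.
  have hAB : phi (A - B) = 0.
    apply: hz; apply: (@key _ _ _ _ rG P _ (fun i => (eps i)^-1)).
    + by move=> i /=; apply: contra => /eqP ->; rewrite invr1.
    + exact: hP.
    + by move=> i; rewrite tnth_mktuple.
    + by move=> i; rewrite tnth_mktuple.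
  by rewrite phiD ?hAB ?add0r //; apply: invB.
- move=> hfix f [h [ih ->]].
  have z i : eps i != 1 -> phi (P i) = 0.
    move=> ne; have := hfix _ (hP i).
    rewrite hinv -mul_mpolyC phiM ?phiC //; last exact: invC.
    move=> E; have : ((eps i)^-1 - 1) * phi (P i) = 0 by rewrite mulrBl E mul1r subrr.
    move/eqP; rewrite mulf_eq0 subr_eq0 invr_eq1 (negPf ne) /=; by move/eqP.
  suff : invariantG rG (\sum_(i < r | [pred i | eps i != 1] i) h i * P i) /\
         phi (\sum_(i < r | [pred i | eps i != 1] i) h i * P i) = 0 by case.
  apply: (big_ind (fun x => invariantG rG x /\ phi x = 0)).
  + by split => //; rewrite -mpolyC0; apply: invC.
  + move=> x y [ix px] [iy py]; split; first exact: invD.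
    by rewrite phiD // px py addr0.
  + move=> i Ui; split; first exact: invM.
    by rewrite phiM // z // mulr0.
Qed.
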